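(* For an information-lossless FS encoder with side information, the joint spectral radius of its family of Kraft matrices satisfies $\rho_{\mathrm{JSR}}(\mathcal{K})\le 1$.
   Context: Let $\mathcal{X}$ be a finite source alphabet, $\mathcal{W}$ a finite side-information alphabet, $\mathcal{Z}$ a finite set of $s$ states, and $\mathcal{Y}$ a finite set of binary strings (possibly including the empty string). An FS encoder with side information is given by an output function $f:\mathcal{Z}\times\mathcal{X}\times\mathcal{W}\to\mathcal{Y}$ and a next-state function $g:\mathcal{Z}\times\mathcal{X}\times\mathcal{W}\to\mathcal{Z}$. Given an initial state $z_1=z$, source symbols $x^n$ and side information $w^n$, it produces $y_i=f(z_i,x_i,w_i)$ and $z_{i+1}=g(z_i,x_i,w_i)$; write $g(z,x^n,w^n)=z_{n+1}$, let $f(z,x^n,w^n)$ be the concatenation of $y_1,\dots,y_n$ as a binary string, and $L[f(z,x^n,w^n)]=\sum_{i=1}^n L(y_i)$ where $L$ is string length. The encoder is information lossless with side information if for every $n$, the quadruple $(z_1, f(z_1,x^n,w^n), w^n, z_{n+1})$ uniquely determines $x^n\in\mathcal{X}^n$. For each $w\in\mathcal{W}$, the Kraft matrix $K(w)$ is the $s\times s$ nonnegative matrix with $[K(w)]_{zz'}=\sum_{\{x\in\mathcal{X}:\ g(z,x,w)=z'\}}2^{-L[f(z,x,w)]}$; for $w^n\in\mathcal{W}^n$, $K(w^n)=K(w_1)K(w_2)\cdots K(w_n)$; and $\mathcal{K}=\{K(w):w\in\mathcal{W}\}$. The joint spectral radius is $\rho_{\mathrm{JSR}}(\mathcal{K})=\lim_{n\to\infty}\max_{w^n\in\mathcal{W}^n}\|K(w^n)\|^{1/n}$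 for any matrix norm $\|\cdot\|$. *)

(* Defs.v *)
From HB Require Import structures.
From mathcomp Require Import all_boot all_order all_algebra.
From mathcomp Require Import all_classical all_reals.
From mathcomp Require Import ereal topology normedtype sequences exp.
Set Implicit Arguments. Unset Strict Implicit. Unset Printing Implicit Defensive.
Import Order.TTheory GRing.Theory Num.Theory.
Local Open Scope ring_scope.

Section FSEncoder.
Variables (X W : finType) (s : nat).
Variables (f : 'I_s -> X -> W -> seq bool) (g : 'I_s -> X -> W -> 'I_s).

Fixpoint gstar (z : 'I_s) (xw : seq (X * W)) : 'I_s :=
  if xw is (x, w) :: t then gstar (g z x w) t else z.

Fixpoint fstar (z : 'I_s) (xw : seq (X * W)) : seq bool :=
  if xw is (x, w) :: t then f z x w ++ fstar (g z x w) t else [::].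

Definition info_lossless : Prop :=
  forall (n : nat) (z : 'I_s) (xs xs' : n.-tuple X) (ws : n.-tuple W),
    fstar z (zip xs ws) = fstar z (zip xs' ws) ->
    gstar z (zip xs ws) = gstar z (zip xs' ws) ->
    xs = xs'.

Variable R : realType.

Definition kraft (w : W) : 'M[R]_s :=
  \matrix_(z, z') \sum_(x : X | g z x w == z') ((2 : R) ^+ size (f z x w))^-1.

Definition kraft_seq (ws : seq W) : 'M[R]_s :=
  foldr (fun w M => kraft w *m M) 1%:M ws.
End FSEncoder.

Definition mxnorm (R : realType) (s : nat) (M : 'M[R]_s) : R :=
  \big[Num.max/0]_(i < s) \sum_(j < s) `|M i j|.

Definition jsr_seq (X W : finType) (s : nat) (f : 'I_s -> X -> W -> seq bool)
  (g : 'I_s -> X -> W -> 'I_s) (R : realType) (n : nat) : R :=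
  (\big[Num.max/0]_(ws : n.-tuple W) mxnorm (kraft_seq f g R ws)) `^ (n%:R^-1).

(* joint spectral radius: lim_n of the above; the limit exists for any matrix
   norm (Fekete), so it coincides with the limit superior, used here. *)
Definition jsr (X W : finType) (s : nat) (f : 'I_s -> X -> W -> seq bool)
  (g : 'I_s -> X -> W -> 'I_s) (R : realType) : \bar R :=
  limn_esup (fun n => (jsr_seq f g R n)%:E).

(* Main.v *)
Require Import Defs.
From HB Require Import structures.
From mathcomp Require Import all_boot all_order all_algebra.
From mathcomp Require Import all_classical all_reals.
From mathcomp Require Import ereal topology normedtype sequences exp.
From mathcomp Require Import ring lra zify.
Import Order.TTheory GRing.Theory Num.Theory.
Local Open Scope ring_scope.

Lemma sum_tupleS (R : realType) (T : finType) n (F : n.+1.-tuple T -> R) :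
  \sum_t F t = \sum_x \sum_(t : n.-tuple T) F [tuple of x :: t].
Proof.
rewrite pair_big /=.
rewrite (reindex (fun p : T * n.-tuple T => [tuple of p.1 :: p.2])) //=.
apply: onW_bij; exists (fun t : n.+1.-tuple T => (thead t, behead_tuple t)).
  by move=> [x t] /=; congr pair; apply: val_inj.
by move=> t /=; rewrite [RHS]tuple_eta.
Qed.

Section Comb.
Variables (R : realType) (X W : finType) (s : nat).
Variables (f : 'I_s -> X -> W -> seq bool) (g : 'I_s -> X -> W -> 'I_s).

Definition cw (b : seq bool) : R := ((2 : R) ^+ size b)^-1.

Lemma rowsum_kraft n (ws : n.-tuple W) z :
  \sum_z' kraft_seq f g R ws z z' =
  \sum_(xs : n.-tuple X) cw (fstar f g z (zip xs ws)).
Proof.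
elim: n ws z => [|n IH] ws z.
  rewrite tuple0 /= /cw.
  rewrite [RHS](eq_bigr (fun=> 1)); last by move=> xs _; rewrite (tuple0 xs) /= expr0 invr1.
  rewrite sumr_const card_tuple expn0 (bigD1 z) //= big1 ?addr0 ?mxE ?eqxx //.
  by move=> i /negPf ne; rewrite mxE eq_sym ne.
rewrite [ws]tuple_eta /=.
set w := thead ws; set ws' := behead_tuple ws.
under eq_bigr => z' _ do rewrite mxE.
rewrite exchange_big /=.
under eq_bigr => y _ do rewrite -mulr_sumr (IH (behead_tuple ws)) mxE mulr_suml big_mkcond /=.
rewrite exchange_big /=.
rewrite sum_tupleS; apply: eq_bigr => x _.
rewrite -big_mkcond (big_pred1 (g z x w)) /=; last by move=> i; rewrite eq_sym.
rewrite mulr_sumr; apply: eq_bigr => t _ /=.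
by rewrite /cw size_cat exprD invfM.
Qed.

Definition Lm : nat := \max_(p : 'I_s * X * W) size (f p.1.1 p.1.2 p.2).

Lemma size_fstar z xw : (size (fstar f g z xw) <= size xw * Lm)%N.
Proof.
elim: xw z => [|[x w] t IH] z //=.
rewrite size_cat mulSn leq_add ?IH //.
exact: (leq_bigmax_cond ((z, x), w)).
Qed.

Lemma rowsum_bound n (ws : n.-tuple W) z : info_lossless f g ->
  \sum_(xs : n.-tuple X) cw (fstar f g z (zip xs ws)) <= (s * (n * Lm).+1)%:R.
Proof.
move=> il.
set M := (n * Lm)%N.
have hs (xs : n.-tuple X) : (size (fstar f g z (zip xs ws)) <= M)%N.
  by have := size_fstar z (zip xs ws); rewrite size_zip !size_tuple minnn.
rewrite (partition_big (fun xs : n.-tuple X => (inord (size (fstar f g z (zip xs ws))) : 'I_M.+1)) predT) //=.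
have -> : (s * M.+1)%:R = \sum_(L < M.+1) (s%:R : R).
  by rewrite sumr_const card_ord natrM mulr_natr.
apply: ler_sum => L _.
set P := [pred xs : n.-tuple X | size (fstar f g z (zip xs ws)) == L].
have EP (xs : n.-tuple X) : ((inord (size (fstar f g z (zip xs ws))) : 'I_M.+1) == L) = P xs.
  by rewrite /P /= -val_eqE /= inordK // ltnS.
rewrite (eq_bigl P) //.
rewrite (eq_bigr (fun=> ((2 : R) ^+ L)^-1)); last first.
  by move=> xs /eqP <-.
rewrite sumr_const.
have cardP : (#|P| <= 2 ^ L * s)%N.
  have := @leq_card_in _ (L.-tuple bool * 'I_s)%type
    (fun xs : n.-tuple X => (insubd (nseq_tuple L false) (fstar f g z (zip xs ws)),
                             gstar g z (zip xs ws))) P.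
  rewrite card_prod card_tuple card_bool card_ord; apply.
  move=> xs1 xs2 H1 H2 [E1 E2]; apply: (il n z xs1 xs2 ws) => //.
  have := congr1 val E1; rewrite !val_insubd.
  rewrite !inE in H1 H2; by rewrite (eqP H1) (eqP H2) !eqxx.
rewrite -[_ *+ #|_|]mulr_natr.
apply: (@le_trans _ _ (((2 : R) ^+ L)^-1 * (2 ^ L * s)%:R)).
  by apply: ler_wpM2l; [rewrite invr_ge0 exprn_ge0 | rewrite ler_nat].
by rewrite natrM natrX mulrA mulVf ?mul1r // expf_neq0.
Qed.
End Comb.

Lemma growth (R : realType) (e : R) (c a : nat) : 0 < e ->
  exists N, forall n, (N <= n)%N -> (c * (n * a).+1)%:R <= (1 + e) ^+ n.
Proof.
move=> e0.
have H n : 1 + n%:R * e <= (1 + e) ^+ n /\ n%:R * (n%:R - 1) * e ^+ 2 <= 2 * (1 + e) ^+ n.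
  elim: n => [|n [IH1 IH2]]; first by rewrite expr0 mul0r addr0 !mul0r lexx mulr1 ler0n.
  have p0 : 0 <= (1 + e) ^+ n by apply: exprn_ge0; lra.
  have n0 : 0 <= n%:R :> R by rewrite ler0n.
  set q := (1 + e) ^+ n in p0 IH1 IH2 *.
  rewrite exprS -natr1 -/q.
  have h1 : (1 + e) * (1 + n%:R * e) <= (1 + e) * q by rewrite ler_wpM2l //; lra.
  have h2 : 0 <= n%:R * e ^+ 2 by rewrite mulr_ge0 // exprn_ge0 // ltW.
  have h3 : 2 * e * (1 + n%:R * e) <= 2 * e * q by rewrite ler_wpM2l //; lra.
  split; nra.
set K : R := (c * a.+1)%:R.
have K0 : 0 <= K by rewrite ler0n.
exists (Num.truncn (4 * K / e ^+ 2)).+2 => n hn.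
have hn' : (4 * K / e ^+ 2) + 1 <= n%:R.
  have := Num.Theory.truncnS_gt (4 * K / e ^+ 2).
  have : ((Num.truncn (4 * K / e ^+ 2)).+2%:R <= n%:R :> R) by rewrite ler_nat.
  rewrite -natr1; lra.
have e2 : 0 < e ^+ 2 by rewrite exprn_gt0.
have hq : 4 * K <= (n%:R - 1) * e ^+ 2.
  have : 4 * K / e ^+ 2 <= n%:R - 1 by lra.
  by rewrite ler_pdivrMr.
have hc : (c * (n * a).+1)%:R <= K * (n%:R + 1).
  rewrite /K natr1 -natrM ler_nat; nia.
have [_ H2] := H n.
have n1 : 1 <= n%:R :> R by rewrite ler1n; case: n hn {hn' hq hc H2}.
nra.
Qed.

Lemma kraft_seq_ge0 (R : realType) (X W : finType) (s : nat)
  (f : 'I_s -> X -> W -> seq bool) (g : 'I_s -> X -> W -> 'I_s) ws i j :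
  0 <= kraft_seq f g R ws i j.
Proof.
elim: ws i j => [|w ws IH] i j /=; first by rewrite mxE ler0n.
rewrite mxE; apply: sumr_ge0 => k _; apply: mulr_ge0 => //.
by rewrite mxE; apply: sumr_ge0 => x _; rewrite invr_ge0 exprn_ge0.
Qed.

Lemma bigmax_bound (R : realType) (I : finType) (F : I -> R) (C : R) :
  0 <= C -> (forall i, 0 <= F i <= C) ->
  0 <= \big[Num.max/0]_(i : I) F i <= C.
Proof.
move=> C0 HF; apply: (big_ind (fun x => 0 <= x <= C)); first by rewrite lexx.
  move=> x y /andP[x0 xC] /andP[y0 yC].
  by rewrite le_max x0 ge_max xC yC.
by move=> i _; exact: HF.
Qed.

Theorem theorem3 (R : realType) (X W : finType) (s : nat)
  (f : 'I_s -> X -> W -> seq bool) (g : 'I_s -> X -> W -> 'I_s) :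
  info_lossless f g -> (jsr f g R <= 1)%E.
Proof.
move=> il.
set C := fun n : nat => ((s * (n * @Lm X W s f).+1)%:R : R).
have aB n : 0 <= \big[Num.max/0]_(ws : n.-tuple W) mxnorm (kraft_seq f g R ws) <= C n.
  apply: bigmax_bound => [|ws]; first by rewrite ler0n.
  apply: bigmax_bound => [|i]; first by rewrite ler0n.
  rewrite sumr_ge0 //=.
  under eq_bigr => j _ do rewrite ger0_norm ?kraft_seq_ge0 //.
  by rewrite rowsum_kraft; exact: rowsum_bound.
rewrite /jsr limn_esup_lim; apply/lee_addgt0Pr => e e0.
have [N HN] := @growth R e s (@Lm X W s f) e0.
apply: lime_le; first exact: is_cvg_esups.
near=> m; apply: ge_ereal_sup => _ [k /= hk <-].
have hkN : (N.+1 <= k)%N.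
  by rewrite (leq_trans _ hk) //; near: m; exists N.+1.
rewrite -EFinD lee_fin /jsr_seq.
have [a0 aC] := andP (aB k).
have C0 : 0 <= C k by rewrite ler0n.
have k0 : 0 <= k%:R^-1 :> R by rewrite invr_ge0 ler0n.
have e1 : 0 <= 1 + e by lra.
apply: le_trans (ge0_ler_powR k0 _ _ aC) _; rewrite ?nnegrE //.
apply: le_trans (ge0_ler_powR k0 _ _ (HN k (ltnW hkN))) _; rewrite ?nnegrE ?exprn_ge0 //.
rewrite -powR_mulrn // -powRrM mulfV ?powRr1 // pnatr_eq0 -lt0n.
by rewrite (leq_trans _ hkN).
Unshelve. all: by end_near.
Qed.
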